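(* Let $W\in\mathbb{Z}^{m\times n}$, let $g:\mathbb{R}^m\to\mathbb{R}$ be convex and differentiable, and $f(x)=g(Wx)$. Assume we have a subroutine $\mathcal{A}$ that, for any face $F \subseteq [0,1]^n$, computes a minimizer $\hat{x}\in\arg\min\{g(Wx): x\in F\}$. Then, with access to the values of $f$, one can find a minimizer $x^\star$ of $f$ over $[0,1]^n$ with at most $m$ fractional entries (entries not in $\{0,1\}$) using at most $2n$ calls to $\mathcal{A}$.
   Context: Faces of the cube $[0,1]^n$ are the sets obtained by fixing some coordinates to $0$ or $1$. *)

(* Defs.v *)
From HB Require Import structures.
From mathcomp Require Import all_boot all_order all_algebra.
From mathcomp Require Import all_classical all_reals all_analysis.
Set Implicit Arguments. Unset Strict Implicit. Unset Printing Implicit Defensive.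
Import Order.TTheory GRing.Theory Num.Theory.
Import numFieldNormedType.Exports.
Local Open Scope classical_set_scope.
Local Open Scope ring_scope.

(* A face of the cube [0,1]^n: each coordinate is either fixed to 0/1
   (Some false / Some true) or free (None). *)
Definition face (n : nat) := {ffun 'I_n -> option bool}.

(* Points of R^n are column vectors 'cV[R]_n; x i 0 is the i-th coordinate. *)
Definition in_face (R : realType) (n : nat) (F : face n) (x : 'cV[R]_n) : Prop :=
  forall i : 'I_n, match F i with
                   | Some b => x i 0 = (b%:R : R)
                   | None => 0 <= x i 0 <= 1
                   end.

Definition cube_face (n : nat) : face n := [ffun => None].

(* An oracle algorithm: it may query the subroutine A on a face (receiving a
   point of R^n), query the value of f at any point (receiving a real), or
   stop and output a point. *)
Inductive prog (R : realType) (n : nat) : Type :=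
| Ret : 'cV[R]_n -> prog R n
| CallA : face n -> ('cV[R]_n -> prog R n) -> prog R n
| EvalF : 'cV[R]_n -> (R -> prog R n) -> prog R n.

Fixpoint run (R : realType) (n : nat) (P : prog R n)
    (A : face n -> 'cV[R]_n) (f : 'cV[R]_n -> R) : 'cV[R]_n * nat :=
  match P with
  | Ret x => (x, 0%N)
  | CallA F k => let r := run (k (A F)) A f in (r.1, r.2.+1)
  | EvalF x k => run (k (f x)) A f
  end.

Definition compose_lin (R : realType) (m n : nat) (W : 'M[int]_(m, n))
    (g : 'cV[R]_m -> R) (x : 'cV[R]_n) : R :=
  g (map_mx (fun z : int => z%:~R) W *m x).

Definition face_minimizer_oracle (R : realType) (n : nat)
    (f : 'cV[R]_n -> R) (A : face n -> 'cV[R]_n) : Prop :=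
  forall F : face n, in_face F (A F) /\ (forall y, in_face F y -> f (A F) <= f y).

Definition num_fractional (R : realType) (n : nat) (x : 'cV[R]_n) : nat :=
  #|[set i : 'I_n | (x i 0 != 0) && (x i 0 != 1)]|.

(* Main.v *)
Require Import Defs.
From HB Require Import structures.
From mathcomp Require Import all_boot all_order all_algebra.
From mathcomp Require Import all_classical all_reals all_analysis.
From mathcomp Require Import lra.
Import Order.TTheory GRing.Theory Num.Theory.
Import numFieldNormedType.Exports.
Local Open Scope classical_set_scope.
Local Open Scope ring_scope.

Definition setF {n : nat} (F : face n) (i : 'I_n) (b : bool) : face n :=
  [ffun j => if j == i then Some b else F j].

Fixpoint loop (R : realType) (n : nat) (m : nat) (k : seq 'I_n) (F : face n)
  (x : 'cV[R]_n) (v : R) : prog R n :=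
  match k with
  | [::] => Ret x
  | i :: k' =>
    if (num_fractional x <= m)%N then Ret x
    else if x i 0 == 0 then loop R n m k' (setF F i false) x v
    else if x i 0 == 1 then loop R n m k' (setF F i true) x v
    else CallA (setF F i false) (fun y => EvalF y (fun w =>
       if w == v then loop R n m k' (setF F i false) y v
       else CallA (setF F i true) (fun z => EvalF z (fun w' =>
         if w' == v then loop R n m k' (setF F i true) z v
         else loop R n m k' F x v))))
  end.
Arguments loop {R n}.


Lemma ker_exists (K : fieldType) m n (M : 'M[K]_(m,n)) (T : {set 'I_n}) :
  (m < #|T|)%N -> exists d : 'cV[K]_n,
    [/\ d != 0, M *m d = 0 & forall j, j \notin T -> d j 0 = 0].
Proof.
move=> hT.
pose E : 'M[K]_(#|~: T|, n) := \matrix_(a, j) ((enum_val a == j)%:R).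
pose C := col_mx M E.
have rC : (\rank C^T < n)%N.
  rewrite mxrank_tr; apply: (leq_ltn_trans (rank_leq_row C)).
  have h := cardsC T; rewrite card_ord in h; rewrite -[X in (_ < X)%N]h.
  by rewrite ltn_add2r.
have hK : kermx C^T != 0.
  by rewrite -mxrank_eq0 mxrank_ker -lt0n subn_gt0.
have [k hk] : exists k, row k (kermx C^T) != 0.
  apply/existsP; move: hK; apply: contraR => /existsPn h; apply/eqP/row_matrixP => k.
  by move/negPn/eqP: (h k) => ->; rewrite linear0.
set u := row k _ in hk.
have hu : u *m C^T = 0 by rewrite /u -row_mul mulmx_ker linear0.
have hd : C *m u^T = 0 by rewrite -[C]trmxK -trmx_mul hu trmx0.
move: hd; rewrite /C mul_col_mx => /eqP; rewrite col_mx_eq0 => /andP[/eqP h1 /eqP h2].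
exists u^T; split => //; first by rewrite trmx_eq0.
move=> j hj.
have hj' : j \in ~: T by rewrite inE.
have := congr1 (fun A : 'M[K]_(#|~: T|,1) => A (enum_rank_in hj' j) 0) h2.
rewrite mxE (bigD1 j) //= big1 ?addr0.
  by rewrite /E mxE (enum_rankK_in hj' hj') eqxx mul1r => ->; rewrite mxE.
move=> l hl; rewrite /E mxE (enum_rankK_in hj' hj').
by rewrite eq_sym (negbTE hl) mul0r.
Qed.

Lemma nfE (R : realType) n (x : 'cV[R]_n) :
  num_fractional x = #|[set j | (x j 0 != 0) && (x j 0 != 1)]%SET|.
Proof.
apply: eq_card => j; rewrite !inE /=.
apply/idP/idP. move/set_mem. done. move=> h. by apply/mem_set.
Qed.

Set Implicit Arguments. Unset Strict Implicit.
Section Main.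
Variables (R : realType) (m n : nat) (W : 'M[int]_(m,n)) (g : 'cV[R]_m -> R).
Local Notation f := (compose_lin W g).
Let Wr := map_mx (fun z : int => z%:~R) W : 'M[R]_(m,n).

Lemma f_ker (x d : 'cV[R]_n) (s : R) : Wr *m d = 0 -> f (x - s *: d) = f x.
Proof. by move=> h; rewrite /compose_lin mulmxBr -scalemxAr h scaler0 subr0. Qed.

Lemma in_face_bounds (F : face n) (y : 'cV[R]_n) :
  in_face F y -> forall j, 0 <= y j 0 <= 1.
Proof.
move=> h j; move: (h j); case: (F j) => [[]|] // ->; by rewrite ?ler01 ?lexx.
Qed.

Lemma in_face_cube (F : face n) (y : 'cV[R]_n) :
  in_face F y -> in_face (cube_face n) y.
Proof. by move=> h j; rewrite /cube_face ffunE; apply: in_face_bounds h j. Qed.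

Lemma frac_free (F : face n) (x : 'cV[R]_n) j :
  in_face F x -> x j 0 != 0 -> x j 0 != 1 -> F j = None.
Proof.
move=> h; move: (h j); case: (F j) => [[]|] // -> /=; by rewrite eqxx.
Qed.

Lemma in_setF (F : face n) i b (y : 'cV[R]_n) : F i = None ->
  in_face (setF F i b) y <-> in_face F y /\ y i 0 = b%:R.
Proof.
move=> hi; split.
  move=> h; split; last by move: (h i); rewrite ffunE eqxx.
  move=> j; move: (h j); rewrite ffunE; case: eqP => [->|//].
  by rewrite hi => ->; case: (b); rewrite ?ler01 ?lexx.
case=> h hb j; rewrite ffunE; case: eqP => [->|_]; [exact: hb | exact: h].
Qed.


Lemma dep (F : face n) (x : 'cV[R]_n) (i : 'I_n) :
  in_face F x -> (m < num_fractional x)%N ->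
  exists y, [/\ in_face F y, f y = f x & exists j,
     [/\ x j 0 != 0, x j 0 != 1 & (y j 0 = 0 \/ (y j 0 = 1 /\ j != i))]].
Proof.
move=> hx hm.
rewrite nfE in hm.
have [d0 [d0nz d0ker d0supp]] := @ker_exists _ _ _ Wr _ hm.
pose d := if d0 i 0 < 0 then - d0 else d0.
have dker : Wr *m d = 0.
  by rewrite /d; case: ifP => _ //; rewrite mulmxN d0ker oppr0.
have dsupp : forall j, (d j 0 != 0) -> (x j 0 != 0) /\ (x j 0 != 1).
  move=> j hj; case: (boolP ((x j 0 != 0) && (x j 0 != 1))) => [/andP[]//|hT].
  have e : d0 j 0 = 0 by apply: d0supp; rewrite inE.
  by move: hj; rewrite /d; case: ifP => _; rewrite ?mxE e ?oppr0 eqxx.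
have hdi : 0 <= d i 0.
  by rewrite /d; case: ifP => h; [rewrite mxE oppr_ge0 ltW | rewrite leNgt h].
have [j0 hj0] : exists j0, d j0 0 != 0.
  apply/existsP; apply: contraR d0nz => /existsPn h.
  apply/eqP/matrixP => a b; rewrite (ord1 b) !mxE.
  move/negPn/eqP: (h a); rewrite /d; case: ifP => _; rewrite ?mxE //.
  by move/eqP; rewrite oppr_eq0 => /eqP.
pose s j := if 0 < d j 0 then x j 0 / d j 0 else (x j 0 - 1) / d j 0.
case: (@arg_minP _ R _ j0 (fun j => d j 0 != 0) s hj0) => j1 hj1 hmin.
set s0 := s j1.
have xb : forall j, 0 <= x j 0 <= 1 := in_face_bounds hx.
have sd : forall j, d j 0 != 0 -> s j * d j 0 = (if 0 < d j 0 then x j 0 else x j 0 - 1).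
  by move=> j hj; rewrite /s; case: ifP => _; rewrite divfK.
have xfr : forall j, d j 0 != 0 -> 0 < x j 0 < 1.
  move=> j /dsupp [h1 h2]; have /andP[a b] := xb j.
  by rewrite !lt_def h1 eq_sym h2 a b.
have s0ge : 0 <= s0.
  have := xfr _ hj1; have := sd _ hj1; rewrite /s0.
  case: ifP => hp.
    move=> e /andP[a b]; rewrite /s hp divr_ge0 // ltW //.
  move=> e /andP[a b]; rewrite /s hp; apply: mulr_le0; first by lra.
  rewrite invr_le0 leNgt hp //.
have yE : forall j, (x - s0 *: d) j 0 = x j 0 - s0 * d j 0 by move=> j; rewrite !mxE.
exists (x - s0 *: d); split.
- move=> j; rewrite yE.
  case: (eqVneq (d j 0) 0) => [->|hj]; first by rewrite mulr0 subr0; exact: hx.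
  have [a b] := dsupp j hj; rewrite (frac_free hx a b).
  have := hmin j hj; rewrite -/s0 => hle.
  have := sd j hj; have := xfr j hj.
  case: ifP => hp /andP[x0 x1] e.
    have : s0 * d j 0 <= s j * d j 0 by rewrite ler_pM2r.
    have : 0 <= s0 * d j 0 by rewrite mulr_ge0 // ltW.
    lra.
  have hn : d j 0 < 0 by rewrite lt_neqAle hj /= leNgt hp.
  have : s j * d j 0 <= s0 * d j 0 by rewrite ler_nM2r.
  have : s0 * d j 0 <= 0 by rewrite mulr_ge0_le0 // ltW.
  lra.
- by apply: f_ker.
- exists j1; have [a b] := dsupp j1 hj1; split => //.
  rewrite yE; have := sd j1 hj1; rewrite -/s0.
  case: ifP => hp e; [left | right]; first by rewrite e subrr.
  split; first by rewrite e; lra.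
  apply/eqP => ej; move: hp; rewrite ej.
  have : d i 0 != 0 by rewrite -ej.
  by rewrite lt_def => -> /=; rewrite hdi.
Qed.

Definition I2 (k : seq 'I_n) (F : face n) (v : R) :=
  forall y, in_face F y -> f y = v -> forall j, j \notin k -> F j = None ->
    (y j 0 != 0) && (y j 0 != 1).

Lemma frac_end (F : face n) (x : 'cV[R]_n) :
  in_face F x -> I2 [::] F (f x) -> (num_fractional x <= m)%N.
Proof.
move=> hx hI; rewrite leqNgt; apply/negP => hm.
have : (0 < num_fractional x)%N by apply: leq_ltn_trans hm.
rewrite nfE card_gt0 => /set0Pn [i _].
have [y [hy fy [j [a b hj]]]] := dep i hx hm.
have /andP[c d] : (y j 0 != 0) && (y j 0 != 1) by apply: (hI y hy fy j _ (frac_free hx a b)); rewrite in_nil.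
by case: hj => [e|[e _]]; move: c d; rewrite e eqxx.
Qed.

Lemma inv_setF (F : face n) i b k' v : uniq (i :: k') ->
  (forall j, j \in i :: k' -> F j = None) -> I2 (i :: k') F v ->
  (forall j, j \in k' -> setF F i b j = None) /\ I2 k' (setF F i b) v.
Proof.
move=> /= /andP[ik' uk] hk hI; split.
  move=> j hj; rewrite ffunE; case: eqP => [e|_]; last by apply: hk; rewrite inE hj orbT.
  by move: ik'; rewrite -e hj.
move=> y hy fy j hj hFj.
have hi : F i = None by apply: hk; rewrite inE eqxx.
move/(in_setF _ _ hi): hy => [hy _].
move: hFj; rewrite ffunE; case: eqP => // /eqP ne hFj.
by apply: hI => //; rewrite inE negb_or ne.
Qed.

Lemma loop_spec (A : face n -> 'cV[R]_n) (hA : face_minimizer_oracle f A) k :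
  forall (F : face n) (x : 'cV[R]_n) (v : R), uniq k -> (forall j, j \in k -> F j = None) -> in_face F x -> f x = v ->
  (forall y, in_face (cube_face n) y -> v <= f y) -> I2 k F v ->
  let r := run (loop m k F x v) A f in
  [/\ in_face F r.1, f r.1 = v, (num_fractional r.1 <= m)%N & (r.2 <= (2 * size k).-1)%N].
Proof.
elim: k => [|i k' IH] F x v uk hk hx fx hopt hI.
  by rewrite /=; split => //; apply: (frac_end hx); rewrite fx.
have hi : F i = None by apply: hk; rewrite inE eqxx.
have uk' : uniq k' by case/andP: uk.
have sizeE : (2 * size (i :: k')).-1 = (2 * size k').+1.
  by change (size (i :: k')) with (size k').+1; rewrite mulnS addSn add1n.
rewrite sizeE /=.
case: ifP => hfr; first by split.
have step : forall b y, in_face (setF F i b) y -> f y = v ->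
    let r := run (loop m k' (setF F i b) y v) A f in
    [/\ in_face F r.1, f r.1 = v, (num_fractional r.1 <= m)%N & (r.2 <= (2 * size k').-1)%N].
  move=> b y hy fy.
  have [h1 h2] := inv_setF b uk hk hI.
  have [r1 r2 r3 r4] := IH (setF F i b) y v uk' h1 hy fy hopt h2.
  by split => //; move/(in_setF _ _ hi): r1 => [].
have le1 : forall a, ((2 * a).-1 <= (2 * a).+1)%N by move=> a; case: (2 * a)%N => //= p; rewrite ltnW.
case: ifP => hx0.
  have [||r1 r2 r3 r4] := step false x => //.
    by apply/in_setF => //; split => //; apply/eqP.
  by split => //; apply: leq_trans r4 _.
case: ifP => hx1.
  have [||r1 r2 r3 r4] := step true x => //.
    by apply/in_setF => //; split => //; apply/eqP.
  by split => //; apply: leq_trans r4 _.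
set F0 := setF F i false; set F1 := setF F i true.
have [hy0 my0] := hA F0.
have [hy1 my1] := hA F1.
have gv0 : v <= f (A F0) by apply: hopt; apply: in_face_cube hy0.
have gv1 : v <= f (A F1) by apply: hopt; apply: in_face_cube hy1.
rewrite /=.
case: (eqVneq (f (A F0)) v) => e0 /=.
  have [r1 r2 r3 r4] := step false (A F0) hy0 e0.
  split => //; apply: leq_ltn_trans r4 _; rewrite ltnS; exact: leq_pred.
move/eqP: e0 => e0.
have nil' : k' <> [::].
  move=> ek; move: hfr hI; rewrite ek leqNgt => /negbFE hm hI.
  have [y [hy fy [j [a b hj]]]] := dep i hx hm.
  have hFj := frac_free hx a b.
  case: (eqVneq j i) => [eji|nji].
    case: hj => [yi0|[_ /negP]]; last by rewrite eji eqxx.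
    apply: e0; apply/eqP; rewrite eq_le gv0 andbT.
    have : in_face F0 y by apply/in_setF => //; split => //; rewrite -eji yi0.
    by move/my0 => h; apply: le_trans h _; rewrite fy fx.
  have /andP[c d] : (y j 0 != 0) && (y j 0 != 1) by apply: (hI y hy (etrans fy fx) j _ hFj); rewrite inE.
  by case: hj => [e|[e _]]; move: c d; rewrite e eqxx.
have le2 : forall a, a <> 0%N -> ((2 * a).-1.+2 <= (2 * a).+1)%N.
  by move=> [|a] //= _; rewrite mulnS.
have szk : size k' <> 0%N by move=> /size0nil.
case: (eqVneq (f (A F1)) v) => e1 /=; last move/eqP: e1 => e1.
  have [r1 r2 r3 r4] := step true (A F1) hy1 e1.
  split => //; apply: leq_trans (le2 _ szk); rewrite !ltnS; exact: r4.
have hI' : I2 k' F v.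
  move=> y hy fy j hj hFj.
  case: (eqVneq j i) => [->|nji]; last first.
    by apply: hI => //; rewrite inE negb_or nji.
  apply/andP; split; apply/negP => /eqP yi.
    apply: e0; apply/eqP; rewrite eq_le gv0 andbT.
    have : in_face F0 y by apply/in_setF => //; split => //; rewrite yi.
    by move/my0 => h; apply: le_trans h _; rewrite fy.
  apply: e1; apply/eqP; rewrite eq_le gv1 andbT.
  have : in_face F1 y by apply/in_setF => //; split => //; rewrite yi.
  by move/my1 => h; apply: le_trans h _; rewrite fy.
have hk' : forall j, j \in k' -> F j = None by move=> j hj; apply: hk; rewrite inE hj orbT.
have [r1 r2 r3 r4] := IH F x v uk' hk' hx fx hopt hI'.
split => //; apply: leq_trans (le2 _ szk); rewrite !ltnS; exact: r4.
Qed.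

End Main.

Theorem mainTheorem5 (R : realType) (m n : nat) :
  exists P : prog R n,
    forall (W : 'M[int]_(m, n)) (g : 'cV[R]_m -> R),
      convex_function setT (g : convex_lmodType 'cV[R]_m -> R^o) ->
      (forall y : 'cV[R]_m, differentiable g y) ->
      forall A : face n -> 'cV[R]_n,
        face_minimizer_oracle (compose_lin W g) A ->
        let res := run P A (compose_lin W g) in
        [/\ in_face (cube_face n) res.1,
            (forall y, in_face (cube_face n) y ->
               compose_lin W g res.1 <= compose_lin W g y),
            (num_fractional res.1 <= m)%N
          & (res.2 <= 2 * n)%N].
Proof.
case: n => [|n].
  exists (Ret 0) => W g _ _ A hA /=; split => //.
  - by move=> [].
  - by move=> y _; rewrite [y]flatmx0.
  - by apply: leq_trans (max_card _) _; rewrite card_ord.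
exists (CallA (cube_face n.+1) (fun x => EvalF x (fun v =>
          loop m (enum 'I_n.+1) (cube_face n.+1) x v))).
move=> W g _ _ A hA /=.
have [hx mx] := hA (cube_face _).
have := @loop_spec R m n.+1 W g A hA (enum 'I_n.+1) (cube_face _) (A (cube_face _))
  (compose_lin W g (A (cube_face _))) (enum_uniq _) _ hx erefl mx.
case.
- by move=> j _; rewrite ffunE.
- by move=> y _ _ j; rewrite mem_enum.
move=> r1 r2 r3 r4; split => //.
- by move=> y hy; rewrite r2; apply: mx.
- move: r4; rewrite size_enum_ord => h.
  by apply: (leq_ltn_trans h); rewrite ltn_predL muln_gt0.
Qed.
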